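(* Let $F\subset\mathrm{Sym}^2(\mathbb{R}^n)$ be a cone subequation invariant under a subgroup of $\mathrm{O}(n)$ acting transitively on $S^{n-1}$, with Riesz characteristic $p=p_F$ and dual Riesz characteristic $q=q_F$. For $\delta\ge0$ let $F(\delta)=\{A: A+\delta(\mathrm{tr}A)\frac1nI\in F\}$. Then the Riesz characteristics of $F(\delta)$ are given by $$p_{F(\delta)}=\frac{n(1+\delta)p}{n+\delta p}=p+\frac{\delta p(n-p)}{n+\delta p},\qquad q_{F(\delta)}=\frac{n(1+\delta)q}{n+\delta q}=q+\frac{\delta q(n-q)}{n+\delta q}.$$ These formulas also hold when $p_F=\infty$ or $q_F=\infty$, that is, for $\delta>0$: $p_F=\infty\Rightarrow p_{F(\delta)}=\frac{n(1+\delta)}{\delta}$ and $q_F=\infty\Rightarrow q_{F(\delta)}=\frac{n(1+\delta)}{\delta}$.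
   Context: A cone subequation is a closed $F\subset\mathrm{Sym}^2(\mathbb{R}^n)$, $\emptyset\ne F\ne\mathrm{Sym}^2(\mathbb{R}^n)$, with $F+\{A\ge0\}\subset F$ and $tF\subset F$ for $t\ge0$. Its Riesz characteristic is $p_F=\sup\{t:P_{e^\perp}-(t-1)P_e\in F\}$ for a (any) unit vector $e$ ($P_e,P_{e^\perp}$ orthogonal projections onto $\mathbb{R}e$, $e^\perp$). The dual of $F$ is $\widetilde F=\mathrm{Sym}^2(\mathbb{R}^n)\setminus(-\mathrm{Int}\,F)$, and the dual Riesz characteristic is $q_F=p_{\widetilde F}$; for $F(\delta)$, $p_{F(\delta)}$ and $q_{F(\delta)}$ are defined in the same way. *)

(* Defs.v *)
From HB Require Import structures.
From mathcomp Require Import all_boot all_order all_algebra.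
From mathcomp Require Import all_classical all_reals ereal.
Set Implicit Arguments. Unset Strict Implicit. Unset Printing Implicit Defensive.
Import Order.TTheory GRing.Theory Num.Theory.
Local Open Scope classical_set_scope.
Local Open Scope ring_scope.

Section Defs.
Variables (R : realType) (n : nat).
Implicit Types (A B : 'M[R]_n) (F : set 'M[R]_n).

Definition symmetric A : Prop := A^T = A.

Definition psd A : Prop :=
  symmetric A /\ forall v : 'rV[R]_n, 0 <= (v *m A *m v^T) 0 0.

Definition near_sym (eps : R) A B : Prop :=
  symmetric B /\ forall i j, `|B i j - A i j| < eps.

Definition closed_sym F : Prop :=
  forall A, symmetric A ->
    (forall eps, 0 < eps -> exists B, F B /\ near_sym eps A B) -> F A.

Definition interior_sym F : set 'M[R]_n :=
  [set A | symmetric A /\ exists eps : R, 0 < eps /\ forall B, near_sym eps A B -> F B].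

Definition cone_subequation F : Prop :=
  F `<=` symmetric /\ closed_sym F /\ F !=set0 /\ F <> symmetric /\
  (forall A P, F A -> psd P -> F (A + P)) /\
  (forall (t : R) A, 0 <= t -> F A -> F (t *: A)).

Definition dual F : set 'M[R]_n :=
  [set A | symmetric A /\ ~ interior_sym F (- A)].

Definition unit_vec (e : 'rV[R]_n) : Prop := (e *m e^T) 0 0 = 1.

Definition Pe (e : 'rV[R]_n) : 'M[R]_n := e^T *m e.
Definition Pperp (e : 'rV[R]_n) : 'M[R]_n := 1%:M - Pe e.

Definition riesz F (e : 'rV[R]_n) : \bar R :=
  ereal_sup ((fun t : R => t%:E) @`
     [set t : R | F (Pperp e - (t - 1) *: Pe e)]).

Definition orth_subgroup (G : set 'M[R]_n) : Prop :=
  [/\ G 1%:M,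
      (forall g, G g -> g *m g^T = 1%:M),
      (forall g h, G g -> G h -> G (g *m h)) &
      (forall g, G g -> G g^T)].

(* G acts transitively on the unit sphere S^{n-1} (action x |-> g x,
   written on row vectors as x |-> x g^T) *)
Definition transitive_sphere (G : set 'M[R]_n) : Prop :=
  forall e1 e2 : 'rV[R]_n, unit_vec e1 -> unit_vec e2 ->
    exists2 g, G g & e1 *m g^T = e2.

Definition invariant_under (G : set 'M[R]_n) F : Prop :=
  forall g A, G g -> F A -> F (g *m A *m g^T).

Definition Fdelta F (delta : R) : set 'M[R]_n :=
  [set A | F (A + (delta * \tr A / n%:R) *: 1%:M)].

End Defs.

(* Main.v *)
Require Import Defs.
From HB Require Import structures.
From mathcomp Require Import all_boot all_order all_algebra.
From mathcomp Require Import all_classical all_reals ereal.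
From mathcomp Require Import ring lra.
Import Order.TTheory GRing.Theory Num.Theory.
Local Open Scope classical_set_scope.
Local Open Scope ring_scope.
Set Implicit Arguments. Unset Strict Implicit.

Section Aux.
Variables (R : realType) (n : nat).
Implicit Types (A B M : 'M[R]_n).

Lemma mul_self_ge0 (x : R) : 0 <= x * x.
Proof. by rewrite -expr2 sqr_ge0. Qed.

Lemma trZ m k (a : R) (X : 'M[R]_(m,k)) : (a *: X)^T = a *: X^T.
Proof. by apply/matrixP => i j; rewrite !mxE. Qed.
Lemma trD m k (X Y : 'M[R]_(m,k)) : (X + Y)^T = X^T + Y^T.
Proof. by apply/matrixP => i j; rewrite !mxE. Qed.
Lemma trN m k (X : 'M[R]_(m,k)) : (- X)^T = - X^T.
Proof. by apply/matrixP => i j; rewrite !mxE. Qed.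

Lemma sqsum_ge0 m (w : 'rV[R]_m) : 0 <= (w *m w^T) 0 0.
Proof. rewrite mxE; apply: sumr_ge0 => i _; rewrite mxE; exact: mul_self_ge0. Qed.

Lemma psd1 : psd (1%:M : 'M[R]_n).
Proof. split; first exact: trmx1. by move=> v; rewrite mulmx1; exact: sqsum_ge0. Qed.

Lemma psdPe (e : 'rV[R]_n) (a : R) : 0 <= a -> psd (a *: Pe e).
Proof.
move=> a0; split.
  apply/matrixP => i j; rewrite !mxE; congr (_ * _).
  by apply: eq_bigr => k _; rewrite !mxE mulrC.
move=> v; rewrite -scalemxAr -scalemxAl mxE; apply: mulr_ge0 => //.
by rewrite /Pe !mulmxA -[v *m e^T *m e *m v^T]mulmxA -[e *m v^T]trmxK trmx_mul trmxK;
  exact: sqsum_ge0.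
Qed.

Lemma Mt_eq (e : 'rV[R]_n) t : Pperp e - (t - 1) *: Pe e = 1%:M - t *: Pe e.
Proof. by rewrite /Pperp scalerBl scale1r opprB addrA subrK. Qed.

Lemma trPe (e : 'rV[R]_n) : unit_vec e -> \tr (Pe e) = 1.
Proof. by move=> ue; rewrite /Pe mxtrace_mulC /mxtrace big_ord1. Qed.

Lemma quad_bound M (v : 'rV[R]_n) :
  `|(v *m M *m v^T) 0 0| <= (\sum_j \sum_i `|M i j|) * (v *m v^T) 0 0.
Proof.
set S := (v *m v^T) 0 0.
have Sge : forall k, v 0 k * v 0 k <= S.
  move=> k; rewrite /S mxE (bigD1 k) //= mxE ler_wpDr //.
  by apply: sumr_ge0 => i _; rewrite mxE; exact: mul_self_ge0.
rewrite mxE mulr_suml; apply: le_trans (ler_norm_sum _ _ _) _.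
apply: ler_sum => j _; rewrite mxE mulr_suml mulr_suml.
apply: le_trans (ler_norm_sum _ _ _) _.
apply: ler_sum => i _; rewrite mxE !normrM mulrC mulrA.
rewrite mulrC ler_wpM2l //.
have a2 : `|v 0 i| * `|v 0 i| = v 0 i * v 0 i by rewrite -normrM ger0_norm // mul_self_ge0.
have b2 : `|v 0 j| * `|v 0 j| = v 0 j * v 0 j by rewrite -normrM ger0_norm // mul_self_ge0.
have := Sge i; have := Sge j; have := normr_ge0 (v 0 i); have := normr_ge0 (v 0 j).
clearbody S; move: S Sge => S _; nra.
Qed.
End Aux.


Section Sup.
Variable R : realType.
Implicit Types S : set R.

Lemma sup_fin S (x : R) : (forall t, S t -> t <= x) ->
  (forall y, y < x -> exists2 t, S t & y < t) ->
  ereal_sup ((fun t : R => t%:E) @` S) = x%:E.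
Proof.
move=> ub ap; apply/eqP; rewrite eq_le; apply/andP; split.
  by apply/ereal_supP => _ [t St <-]; rewrite lee_fin; exact: ub.
case E: (ereal_sup _) => [r| |].
- rewrite lee_fin leNgt; apply/negP => rx.
  have [t St rt] := ap _ rx.
  have : (t%:E <= ereal_sup ((fun t : R => t%:E) @` S))%E.
    by apply: ereal_sup_ubound; exists t.
  by rewrite E lee_fin leNgt rt.
- by rewrite leey.
- have x1 : x - 1 < x by rewrite ltrBlDr ltrDl ltr01.
  have [t St _] := ap (x - 1) x1.
  have : (t%:E <= ereal_sup ((fun t : R => t%:E) @` S))%E.
    by apply: ereal_sup_ubound; exists t.
  by rewrite E.
Qed.

Lemma sup_inf S : (forall y, exists2 t, S t & y < t) ->
  ereal_sup ((fun t : R => t%:E) @` S) = +oo%E.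
Proof.
move=> ap; case E: (ereal_sup _) => [r| |] //.
- have [t St rt] := ap r.
  have : (t%:E <= ereal_sup ((fun t : R => t%:E) @` S))%E.
    by apply: ereal_sup_ubound; exists t.
  by rewrite E lee_fin leNgt rt.
- have [t St _] := ap 0.
  have : (t%:E <= ereal_sup ((fun t : R => t%:E) @` S))%E.
    by apply: ereal_sup_ubound; exists t.
  by rewrite E.
Qed.

Lemma sup_fin_ub S x t : ereal_sup ((fun t : R => t%:E) @` S) = x%:E -> S t -> t <= x.
Proof.
move=> E St; rewrite -lee_fin -E; apply: ereal_sup_ubound; by exists t.
Qed.

Lemma sup_fin_ap S x y : ereal_sup ((fun t : R => t%:E) @` S) = x%:E -> y < x ->
  exists2 t, S t & y < t.
Proof.
move=> E yx; have : (y%:E < ereal_sup ((fun t : R => t%:E) @` S))%E by rewrite E lte_fin.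
by move/ereal_sup_gt => [_ [t St <-]]; rewrite lte_fin => yt; exists t.
Qed.

Lemma sup_inf_ap S y : ereal_sup ((fun t : R => t%:E) @` S) = +oo%E ->
  exists2 t, S t & y < t.
Proof.
move=> E; have : (y%:E < ereal_sup ((fun t : R => t%:E) @` S))%E by rewrite E ltey.
by move/ereal_sup_gt => [_ [t St <-]]; rewrite lte_fin => yt; exists t.
Qed.
End Sup.
Arguments sup_fin {R S x}.
Arguments sup_inf {R S}.
Arguments sup_fin_ub {R S x t}.
Arguments sup_fin_ap {R S x y}.
Arguments sup_inf_ap {R S} y.
Section Ar.
Variable R : realType.
Implicit Types N d t p c : R.
Lemma ar_tpos N d t : 0 < N -> 0 <= d -> N + d*(N-t) <= 0 -> 0 < t.
Proof.
move=> Np hd h1; rewrite ltNge; apply/negP => tn.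
have mt : 0 <= - t by rewrite oppr_ge0.
have := mulr_ge0 hd mt; have := mulr_ge0 hd (ltW Np); nra.
Qed.
Lemma ar_ub N d p t c : 0 < N -> c * N = N + d * (N - t) -> t <= p * c ->
  t * (N + d * p) <= N * (1 + d) * p.
Proof.
move=> Np ce tp; have := ler_wpM2r (ltW Np) tp => h.
have h2 : t * N <= p * (N + d * (N - t)) by rewrite -ce mulrA.
nra.
Qed.
Lemma ar_ap N d p t c : 0 < N -> 0 <= d -> 0 <= p -> c * N = N + d * (N - t) ->
  t * (N + d * p) < N * (1 + d) * p -> 0 < c /\ t < p * c.
Proof.
move=> Np hd hp ce h.
have h1 : t * N < p * c * N by rewrite -mulrA ce; nra.
have h2 : t < p * c by rewrite -(ltr_pM2r Np).
split => //; rewrite ltNge; apply/negP => c0.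
have pc : p * c <= 0 by rewrite mulr_ge0_le0.
have t0 : t < 0 by apply: lt_le_trans h2 pc.
have : c * N <= 0 by rewrite mulr_le0_ge0 // ltW.
rewrite ce; have mt : 0 <= - t by rewrite oppr_ge0 ltW.
have := mulr_ge0 hd mt; have := mulr_ge0 hd (ltW Np); nra.
Qed.
Lemma ar_inf_ub N d t c : 0 < N -> 0 < d -> c * N = N + d * (N - t) -> 0 <= c ->
  t <= N * (1 + d) / d.
Proof.
move=> Np hd ce c0; rewrite ler_pdivlMr //.
have : 0 <= c * N by rewrite mulr_ge0 // ltW.
rewrite ce; nra.
Qed.
Lemma ar_inf_ap N d t c : 0 < N -> 0 < d -> c * N = N + d * (N - t) ->
  t < N * (1 + d) / d -> 0 < c.
Proof.
move=> Np hd ce; rewrite ltr_pdivlMr // => h.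
have : 0 < c * N by rewrite ce; nra.
by rewrite pmulr_lgt0.
Qed.
End Ar.


Unset Implicit Arguments.
Section Gen.
Variables (R : realType) (n : nat) (H : set 'M[R]_n) (d : R) (e : 'rV[R]_n).
Hypotheses (hn : (0 < n)%N) (ue : unit_vec e) (hd : 0 <= d).
Hypotheses (H0 : H 0) (H2 : forall A P, H A -> psd P -> H (A + P))
  (H3 : forall (c : R) A, 0 < c -> H A -> H (c *: A)) (H4 : ~ H (- 1%:M)).

Let N : R := n%:R.
Let Npos : 0 < N. Proof. by rewrite /N ltr0n. Qed.
Let P := Pe e.
Let Q s := H (1%:M - s *: P).
Let cc t := 1 + d * (N - t) / N.
Let cN t : cc t * N = N + d * (N - t).
Proof. rewrite /cc; field; exact: lt0r_neq0. Qed.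

Let rieszE : riesz H e = ereal_sup ((fun t : R => t%:E) @` Q).
Proof.
rewrite /riesz; congr ereal_sup; congr image; apply/seteqP; split => t /=;
  by rewrite Mt_eq.
Qed.

Let rieszdE : riesz (Fdelta H d) e =
  ereal_sup ((fun t : R => t%:E) @` [set t | H (cc t *: 1%:M - t *: P)]).
Proof.
rewrite /riesz; congr ereal_sup; congr image; apply/seteqP; split => t /=;
  rewrite /Fdelta /= Mt_eq raddfB /= mxtraceZ mxtrace1 trPe // mulr1 /cc
     scalerDl scale1r addrAC //.
Qed.

Let down s s' : Q s -> s' <= s -> Q s'.
Proof.
move=> Qs le; rewrite /Q; have -> : 1%:M - s' *: P = (1%:M - s *: P) + (s - s') *: P.
  by rewrite scalerBl addrA subrK.
by apply: H2 => //; apply: psdPe; rewrite subr_ge0.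
Qed.

Let Q0 : Q 0.
Proof. by rewrite /Q scale0r subr0 -[1%:M]add0r; apply: H2 => //; exact: psd1. Qed.

Let posc c t : 0 < c -> H (c *: 1%:M - t *: P) -> Q (t / c).
Proof.
move=> c0 Hc; have hc : 0 < c^-1 by rewrite invr_gt0.
have := H3 (c^-1) _ hc Hc.
rewrite scalerBr !scalerA mulVf ?lt0r_neq0 // scale1r mulrC.
done.
Qed.

Let posc' c t : 0 < c -> Q (t / c) -> H (c *: 1%:M - t *: P).
Proof.
move=> c0 Hc; have := H3 c _ c0 Hc.
by rewrite scalerBr scalerA mulrC divfK ?lt0r_neq0 // scalemx1.
Qed.

Let negc c t : c < 0 -> 0 <= t -> ~ H (c *: 1%:M - t *: P).
Proof.
move=> c0 t0 Hc; apply: H4.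
have : H (c *: 1%:M) by rewrite -[c *: 1%:M](subrK (t *: P)); apply: H2 => //; exact: psdPe.
have hc : 0 < - c^-1 by rewrite oppr_gt0 invr_lt0.
move/(H3 _ _ hc).
by rewrite scalerA mulNr mulVf ?ltr0_neq0 // scaleNr scale1r.
Qed.

Let zeroc t : 0 < t -> H (0 *: 1%:M - t *: P) -> forall s, 0 < s -> Q s.
Proof.
move=> t0 Hc s s0; have := H3 (s / t) _ (divr_gt0 s0 t0) Hc.
rewrite scale0r sub0r scalerN scalerA divfK ?lt0r_neq0 // => Hs.
by rewrite /Q addrC; apply: H2 Hs _; exact: psd1.
Qed.

Let cases t : H (cc t *: 1%:M - t *: P) ->
  (0 < cc t /\ Q (t / cc t)) \/ (cc t = 0 /\ forall s, 0 < s -> Q s).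
Proof.
move=> Ht; have := cN t; case: (ltgtP 0 (cc t)) => c0 ce.
- by left; split => //; exact: posc.
- exfalso; apply: (negc _ _ c0 _ Ht); apply: ltW; apply: (@ar_tpos R N d t Npos hd).
  by rewrite -ce; apply: ltW; rewrite pmulr_llt0.
- right; split => //; rewrite -c0 in Ht; apply: zeroc Ht.
  by apply: (@ar_tpos R N d t Npos hd); rewrite -ce -c0 mul0r.
Qed.

Lemma gen_fin p : riesz H e = p%:E ->
  riesz (Fdelta H d) e = (N * (1 + d) * p / (N + d * p))%:E.
Proof.
rewrite rieszE rieszdE => E.
have p0 : 0 <= p := sup_fin_ub E Q0.
have Dp : 0 < N + d * p by apply: ltr_wpDr => //; exact: mulr_ge0.
apply: sup_fin => [t /= Ht|y yp].
  rewrite ler_pdivlMr //.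
  case: (cases _ Ht) => [[c0 Qt]|[_ Qall]].
  - have := sup_fin_ub E Qt; rewrite ler_pdivrMr // => tp.
    exact: (ar_ub Npos (cN t) tp).
  - have p1 : 0 < p + 1 by rewrite ltr_wpDl.
    by have := sup_fin_ub E (Qall _ p1); rewrite gerDl ler10.
pose t := (y + N * (1 + d) * p / (N + d * p)) / 2.
have yt : y < t by rewrite /t ltr_pdivlMr // mulr_natr mulr2n ltrD2l.
have tp : t < N * (1 + d) * p / (N + d * p).
  by rewrite /t ltr_pdivrMr // mulr_natr mulr2n ltrD2r.
exists t => //=.
have h : t * (N + d * p) < N * (1 + d) * p by rewrite -ltr_pdivlMr.
have [c0 tc] := ar_ap Npos hd p0 (cN t) h.
apply: posc' => //.
have h2 : t / cc t < p by rewrite ltr_pdivrMr.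
have [s Qs ts] := sup_fin_ap E h2.
exact: down Qs (ltW ts).
Qed.

Lemma gen_inf : 0 < d -> riesz H e = +oo%E ->
  riesz (Fdelta H d) e = (N * (1 + d) / d)%:E.
Proof.
move=> dpos; rewrite rieszE rieszdE => E.
apply: sup_fin => [t /= Ht|y yp].
  case: (cases _ Ht) => [[c0 _]|[c0 _]];
    apply: (ar_inf_ub Npos dpos (cN t)); [exact: ltW | by rewrite c0].
pose t := (y + N * (1 + d) / d) / 2.
have yt : y < t by rewrite /t ltr_pdivlMr // mulr_natr mulr2n ltrD2l.
have tp : t < N * (1 + d) / d.
  by rewrite /t ltr_pdivrMr // mulr_natr mulr2n ltrD2r.
exists t => //=.
have c0 := ar_inf_ap Npos dpos (cN t) tp.
apply: posc' => //.
have [s Qs ts] := sup_inf_ap (t / cc t) E.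
exact: down Qs (ltW ts).
Qed.
Lemma gen_p0 p : riesz H e = p%:E -> 0 <= p.
Proof. by rewrite rieszE => E; exact: sup_fin_ub E Q0. Qed.
End Gen.
Arguments gen_fin {R n H d e}.
Arguments gen_inf {R n H d e}.
Set Implicit Arguments.


Section FF.
Variables (R : realType) (n : nat) (F : set 'M[R]_n).
Hypotheses (hn : (0 < n)%N) (cF : cone_subequation F).

Lemma symE (A : 'M[R]_n) : Defs.symmetric A -> forall i j, A i j = A j i.
Proof. by move=> sA i j; rewrite -{1}sA mxE. Qed.

Lemma symP (A : 'M[R]_n) : (forall i j, A i j = A j i) -> Defs.symmetric A.
Proof. by move=> h; apply/matrixP => i j; rewrite mxE h. Qed.

Lemma F0 : F 0.
Proof.
case: cF => _ [_ [[A FA] [_ [_ F3]]]].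
by have := F3 0 A (lexx _) FA; rewrite scale0r.
Qed.

Lemma Fpsd P : psd P -> F P.
Proof. case: cF => _ [_ [_ [_ [F2 _]]]] hP; by rewrite -[P]add0r; apply: F2 F0 hP. Qed.

Lemma F4 : ~ F (- 1%:M).
Proof.
case: cF => Fsym [_ [_ [Fne [F2 F3]]]] Fm1; apply: Fne.
apply/seteqP; split => // A sA.
pose t := \sum_j \sum_i `|A i j|.
have t0 : 0 <= t by apply: sumr_ge0 => j _; apply: sumr_ge0 => i _.
have hP : psd (A + t *: 1%:M).
  split.
    apply: symP => i j; rewrite !mxE (symE sA i j) eq_sym //.
  move=> v; rewrite mulmxDr mulmxDl -scalemxAr -scalemxAl mulmx1.
  have := quad_bound A v; rewrite ler_norml => /andP[h _].
  move: h; rewrite -/t; set q := (v *m A *m v^T); set S := (v *m v^T).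
  rewrite [(q + _) 0 0]mxE [(t *: S) 0 0]mxE => h.
  by rewrite -subr_ge0 opprK in h.
have := F2 _ _ (F3 t _ t0 Fm1) hP.
by rewrite scalerN addrC addrK.
Qed.
Lemma IntI : interior_sym F 1%:M.
Proof.
split; first exact: trmx1.
pose eps : R := ((n * n)%:R)^-1.
have nn0 : (0 < n * n)%N by rewrite muln_gt0 hn.
exists eps; split; first by rewrite invr_gt0 ltr0n.
move=> B [sB hB]; apply: Fpsd; split => // v.
have -> : B = 1%:M + (B - 1%:M) by rewrite addrC subrK.
rewrite mulmxDr mulmxDl mulmx1.
have := quad_bound (B - 1%:M) v; set D := B - 1%:M; set q := v *m D *m v^T.
set S := v *m v^T.
have bound : \sum_j \sum_i `|D i j| <= 1.
  apply: (@le_trans _ _ (\sum_(j < n) \sum_(i < n) eps)).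
    apply: ler_sum => j _; apply: ler_sum => i _.
    by rewrite /D mxE; apply: ltW; have := hB i j; rewrite !mxE.
  rewrite !sumr_const !card_ord -mulrnA -mulr_natr mulVf //.
  by rewrite pnatr_eq0 -lt0n.
have S0 : 0 <= S 0 0 := sqsum_ge0 v.
have := ler_wpM2r S0 bound; rewrite mul1r => h2.
rewrite ler_norml => /andP[h1 _].
rewrite mxE addrC -[S 0 0]opprK subr_ge0.
apply: le_trans h1; by rewrite lerN2.
Qed.
Lemma eqnorm_lt (x y eps : R) : x = y -> `|y| < eps -> `|x| < eps.
Proof. by move=> ->. Qed.

Lemma D2 A P : dual F A -> psd P -> dual F (A + P).
Proof.
case=> sA nI hP; have sP := hP.1; split.
  by apply: symP => i j; rewrite !mxE (symE sA) (symE sP).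
move=> [_ [eps [e0 hI]]]; apply: nI; split.
  by apply: symP => i j; rewrite !mxE (symE sA).
exists eps; split => // B [sB hB].
case: cF => _ [_ [_ [_ [F2 _]]]].
rewrite -[B](subrK P); apply: F2 hP; apply: hI; split.
  by apply: symP => i j; rewrite !mxE (symE sB) (symE sP).
move=> i j; have := hB i j; rewrite !mxE; apply: eqnorm_lt; ring.
Qed.

Lemma D3 (c : R) A : 0 < c -> dual F A -> dual F (c *: A).
Proof.
move=> c0 [sA nI]; split.
  by apply: symP => i j; rewrite !mxE (symE sA).
move=> [_ [eps [e0 hI]]]; apply: nI; split.
  by apply: symP => i j; rewrite !mxE (symE sA).
exists (eps / c); split; first by rewrite divr_gt0.
move=> B [sB hB].
case: cF => _ [_ [_ [_ [_ F3]]]].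
have : F (c *: B).
  apply: hI; split; first by apply: symP => i j; rewrite !mxE (symE sB).
  move=> i j; have := hB i j; rewrite ltr_pdivlMr // => h.
  rewrite !mxE; apply: (eqnorm_lt (y := (B i j - - A i j) * c)); last first.
    by rewrite normrM (gtr0_norm c0); move: h; rewrite !mxE.
  ring.
have ci : 0 <= c^-1 by rewrite invr_ge0 ltW.
by move/(F3 _ _ ci); rewrite scalerA mulVf ?gt_eqF // scale1r.
Qed.
Lemma D0 : dual F 0.
Proof.
split; first by apply: symP => i j; rewrite !mxE.
move=> [_ [eps [e0 hI]]]; apply: F4.
have FB : F ((- (eps / 2)) *: 1%:M).
  apply: hI; split; first by apply: symP => i j; rewrite !mxE eq_sym.
  have e2 : 0 < eps / 2 by rewrite divr_gt0.
  move=> i j; rewrite !mxE oppr0 subr0; case: eqP => _.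
    by rewrite mulr1 normrN gtr0_norm // ltr_pdivrMr // ltr_pMr // ltr1n.
  by rewrite mulr0 normr0.
case: cF => _ [_ [_ [_ [_ F3]]]].
have ci : 0 <= 2 / eps by rewrite divr_ge0 // ltW.
move/(F3 _ _ ci): FB; rewrite scalerA.
have -> : 2 / eps * - (eps / 2) = -1 by field; rewrite gt_eqF.
by rewrite scaleNr scale1r.
Qed.

Lemma D4 : ~ dual F (- 1%:M).
Proof. by case=> _; rewrite opprK; apply; exact: IntI. Qed.
End FF.


Section Lk.
Variables (R : realType) (n : nat) (d : R).
Hypotheses (hn : (0 < n)%N) (hd : 0 <= d).
Let N : R := n%:R.
Let Npos : 0 < N. Proof. by rewrite /N ltr0n. Qed.
Let Nn0 : N != 0. Proof. exact: lt0r_neq0. Qed.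

Definition Lk (k : R) (X : 'M[R]_n) := X + (k * \tr X / n%:R) *: 1%:M.

Lemma LkE k X i j : Lk k X i j = X i j + (k * \tr X / N) * (i == j)%:R.
Proof. by rewrite !mxE. Qed.

Lemma mxtrN (X : 'M[R]_n) : \tr (- X) = - \tr X.
Proof. by rewrite /mxtrace -sumrN; apply: eq_bigr => i _; rewrite mxE. Qed.

Lemma trLk k X : \tr (Lk k X) = (1 + k) * \tr X.
Proof. rewrite /Lk mxtraceD mxtraceZ mxtrace1 -/N; field. exact: Nn0. Qed.

Lemma LkK a b X : Lk a (Lk b X) = Lk (a + b + a * b) X.
Proof.
apply/matrixP => i j; rewrite LkE trLk !LkE -/N; field; exact: Nn0.
Qed.

Lemma Lk0 X : Lk 0 X = X.
Proof. by rewrite /Lk !mul0r scale0r addr0. Qed.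

Lemma LkN k X : Lk k (- X) = - Lk k X.
Proof. apply/matrixP => i j; rewrite !mxE mxtrN -/N; ring. Qed.

Lemma Lk_sym k X : Defs.symmetric (Lk k X) <-> Defs.symmetric X.
Proof.
split=> h; apply: symP => i j.
  have := symE h i j; rewrite !LkE eq_sym => e; exact: (addIr _ e).
by rewrite !LkE (symE h i j) eq_sym.
Qed.

Lemma near_Lk k eps (A B : 'M[R]_n) : `|k| <= d ->
  (forall i j, `|B i j - A i j| < eps) ->
  forall i j, `|Lk k B i j - Lk k A i j| < (1 + d) * eps.
Proof.
move=> kd hB i j.
have htr : `|\tr B - \tr A| <= N * eps.
  rewrite /mxtrace -sumrB; apply: le_trans (ler_norm_sum _ _ _) _.
  apply: (@le_trans _ _ (\sum_(i < n) eps)).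
    by apply: ler_sum => l _; apply: ltW.
  by rewrite sumr_const card_ord -mulr_natl.
have e0 : 0 <= eps by apply: le_trans (normr_ge0 _) (ltW (hB i j)).
rewrite !LkE (_ : _ - _ = (B i j - A i j) + k * ((\tr B - \tr A) / N) * (i == j)%:R);
  last by field.
rewrite [(1 + d) * eps]mulrDl mul1r; apply: le_lt_trans (ler_normD _ _) _.
apply: ltr_leD => //.
rewrite !normrM; apply: (@le_trans _ _ (d * eps * 1)); last by rewrite mulr1.
apply: ler_pM => //.
  apply: ler_pM => //; rewrite normfV (gtr0_norm Npos) ler_pdivrMr //.
  by rewrite mulrC.
by case: eqP; rewrite ?normr1 ?normr0.
Qed.

Let m := - (d / (1 + d)).
Let d1 : 0 < 1 + d. Proof. by rewrite ltr_wpDr. Qed.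
Let mK X : Lk m (Lk d X) = X.
Proof. by rewrite LkK (_ : m + d + m * d = 0) ?Lk0 // /m; field; rewrite gt_eqF. Qed.
Let Km X : Lk d (Lk m X) = X.
Proof. by rewrite LkK (_ : d + m + d * m = 0) ?Lk0 // /m; field; rewrite gt_eqF. Qed.
Let md : `|m| <= d.
Proof.
rewrite /m normrN ger0_norm; last by rewrite divr_ge0 // ltW.
rewrite ler_pdivrMr //; apply: ler_peMr => //; by rewrite lerDl.
Qed.

Lemma int_equiv (F : set 'M[R]_n) X :
  interior_sym (Fdelta F d) X <-> interior_sym F (Lk d X).
Proof.
split.
  move=> [sX [eps [e0 hI]]]; split; first by apply/Lk_sym.
  exists (eps / (1 + d)); split; first by rewrite divr_gt0.
  move=> B [sB hB]; rewrite -(Km B); apply: (hI (Lk m B)); split.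
    by apply/Lk_sym.
  move=> i j; have := near_Lk md hB i j; rewrite mK mulrC divfK ?gt_eqF //.
move=> [sX [eps [e0 hI]]]; split; first by apply/(Lk_sym d).
exists (eps / (1 + d)); split; first by rewrite divr_gt0.
move=> B [sB hB]; apply: hI; split; first by apply/Lk_sym.
have dd : `|d| <= d by rewrite ger0_norm.
move=> i j; have := near_Lk dd hB i j; rewrite mulrC divfK ?gt_eqF //.
Qed.

Lemma dual_Fdelta (F : set 'M[R]_n) : dual (Fdelta F d) = Fdelta (dual F) d.
Proof.
apply/seteqP; split => A /=.
  move=> [sA nI]; split; first by apply/Lk_sym.
  move=> h; apply: nI; apply/int_equiv; rewrite LkN; exact: h.
move=> [sA nI]; split; first by apply/(Lk_sym d).
move=> h; apply: nI; rewrite -LkN; apply/int_equiv; exact: h.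
Qed.
End Lk.

Unset Implicit Arguments.

Theorem propositionA11 (R : realType) (n : nat) (F : set 'M[R]_n)
    (G : set 'M[R]_n) (delta : R) (e : 'rV[R]_n) :
  (0 < n)%N ->
  cone_subequation F ->
  orth_subgroup G -> transitive_sphere G -> invariant_under G F ->
  0 <= delta ->
  unit_vec e ->
  (* Riesz characteristic p = p_F *)
  (forall p : R, riesz F e = p%:E ->
     riesz (Fdelta F delta) e = (n%:R * (1 + delta) * p / (n%:R + delta * p))%:E
     /\ riesz (Fdelta F delta) e
        = (p + delta * p * (n%:R - p) / (n%:R + delta * p))%:E) /\
  (* dual Riesz characteristic q = q_F *)
  (forall q : R, riesz (dual F) e = q%:E ->
     riesz (dual (Fdelta F delta)) e
       = (n%:R * (1 + delta) * q / (n%:R + delta * q))%:E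
     /\ riesz (dual (Fdelta F delta)) e
       = (q + delta * q * (n%:R - q) / (n%:R + delta * q))%:E) /\
  (* the infinite cases, for delta > 0 *)
  (0 < delta -> riesz F e = +oo%E ->
     riesz (Fdelta F delta) e = (n%:R * (1 + delta) / delta)%:E) /\
  (0 < delta -> riesz (dual F) e = +oo%E ->
     riesz (dual (Fdelta F delta)) e = (n%:R * (1 + delta) / delta)%:E).
Proof.
move=> hn cF _ _ _ hd ue.
have cF' := cF; case: cF' => _ [_ [_ [_ [F2 F3]]]].
have F3' : forall (c : R) A, 0 < c -> F A -> F (c *: A).
  by move=> c A c0; apply: F3; exact: ltW.
have H0 := F0 cF; have H4 := F4 cF.
have G0 := D0 cF; have G4 := D4 hn cF.
have G2 : forall A P, dual F A -> psd P -> dual F (A + P) by move=> A P; exact: (D2 cF).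
have G3 : forall (c : R) A, 0 < c -> dual F A -> dual F (c *: A) by move=> c A; exact: (D3 cF).
have Npos : 0 < (n%:R : R) by rewrite ltr0n.
have alg : forall p : R, 0 <= p -> n%:R * (1 + delta) * p / (n%:R + delta * p)
    = p + delta * p * (n%:R - p) / (n%:R + delta * p).
  move=> p p0; have D : n%:R + delta * p != 0.
    by rewrite gt_eqF // ltr_wpDr // mulr_ge0.
  by field.
split; [|split; [|split]].
- move=> p E; have h := gen_fin hn ue hd H0 F2 F3' H4 _ E.
  have p0 := @gen_p0 R n F e H0 F2 p E.
  by rewrite h -alg.
- move=> q E; rewrite (dual_Fdelta hn hd).
  have h := gen_fin hn ue hd G0 G2 G3 G4 _ E.
  have q0 := @gen_p0 R n (dual F) e G0 G2 q E.
  by rewrite h -alg.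
- by move=> dpos E; exact: (gen_inf hn ue hd F2 F3' H4 dpos E).
- move=> dpos E; rewrite (dual_Fdelta hn hd).
  exact: (gen_inf hn ue hd G2 G3 G4 dpos E).
Qed.
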